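(* Let $q:\mathbb{R}\to[0,\infty)$ be an even probability density, let $r:\mathbb{R}\to\mathbb{R}$ be measurable, and let $A=\sum_i a_i|i\rangle\langle i|$ be a Hermitian operator on a finite-dimensional Hilbert space $\mathcal{H}$ such that $\int|r(p)|\,q(a_i-p)\,dp<\infty$ for every eigenvalue $a_i$; set $s(a)\coloneqq(q*r)(a)=\int_{\mathbb{R}}q(a-p)r(p)\,dp$. Let $\rho$ be a density operator on $\mathcal{H}$, let $|q\rangle\coloneqq\int_{\mathbb{R}}dp\,\sqrt{q(p)}\,|p\rangle$, let $W\coloneqq e^{i\hat{x}\otimes A}=\sum_i\int dx\,e^{ixa_i}|x\rangle\langle x|\otimes|i\rangle\langle i|$, and define $$P(p)\coloneqq\operatorname{Tr}\!\left[(|p\rangle\langle p|\otimes I)\,W(|q\rangle\langle q|\otimes\rho)W^{\dagger}\right]\quad(p\in\mathbb{R}),$$ the probability density of the outcome of a momentum measurement on the control mode. Then $P$ is a probability density and $$\int_{\mathbb{R}}r(p)\,P(p)\,dp=\operatorname{Tr}[s(A)\rho].$$ That is, preparing $|q\rangle\langle q|\otimes\rho$, applying $e^{i\hat{x}\otimes A}$, measuring the control mode in the momentum basis with outcome $p$ and outputting $r(p)$ yields a random variable with expected value $\operatorname{Tr}[s(A)\rho]$.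
   Context: The control register is a single bosonic mode (qumode) with Hilbert space $L^2(\mathbb{R})$; $\{|x\rangle\}_{x\in\mathbb{R}}$ and $\{|p\rangle\}_{p\in\mathbb{R}}$ are the generalized position and momentum eigenbases, with $\langle x|p\rangle=e^{ipx}/\sqrt{2\pi}$, $\langle p|p'\rangle=\delta(p-p')$, and $\hat{x}=\int x|x\rangle\langle x|\,dx$ is the position quadrature operator. $s(A)$ is defined by the functional calculus. *)

(* Defs.v *)
From mathcomp Require Import all_boot all_algebra complex.
From mathcomp Require Import all_classical all_reals all_analysis.
Set Implicit Arguments. Unset Strict Implicit. Unset Printing Implicit Defensive.
Import GRing.Theory Num.Theory.
Local Open Scope ring_scope.

Definition cR (R : realType) (x : R) : R[i] := (x%:C)%C.

Definition adjm (R : realType) m n (M : 'M[R[i]]_(m, n)) : 'M[R[i]]_(n, m) :=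
  map_mx Num.conj M^T.

Definition hermitian (R : realType) n (M : 'M[R[i]]_n) : Prop := adjm M = M.

Definition unitary (R : realType) n (U : 'M[R[i]]_n) : Prop := adjm U *m U = 1%:M.

Definition density_op (R : realType) n (rho : 'M[R[i]]_n) : Prop :=
  [/\ hermitian rho,
      (forall v : 'cV[R[i]]_n, 0 <= (adjm v *m rho *m v) 0 0)
    & \tr rho = 1].

Definition eproj (R : realType) n (U : 'M[R[i]]_n) (i : 'I_n) : 'M[R[i]]_n :=
  col i U *m adjm (col i U).

(* functional calculus f(A) for A = sum_i a_i |i><i|, |i> = i-th column of U *)
Definition fcalc (R : realType) n (U : 'M[R[i]]_n) (a : 'I_n -> R) (f : R -> R)
  : 'M[R[i]]_n := \sum_(i < n) cR (f (a i)) *: eproj U i.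

Definition prob_density (R : realType) (q : R -> R) : Prop :=
  [/\ measurable_fun setT q, (forall x, 0 <= q x)
    & (\int[(@lebesgue_measure R)]_x (q x)%:E = 1)%E].

(* Operators on L^2(R) (x) C^n written in the momentum representation as
   (operator-valued) kernels:  X = \int\int dp dp' |p><p'| (x) X p p'. *)
Definition kernel (R : realType) n := R -> R -> 'M[R[i]]_n.

(* |psi><psi| (x) rho, for psi the momentum wave function p |-> <p|psi> *)
Definition prod_state (R : realType) n (psi : R -> R[i]) (rho : 'M[R[i]]_n)
  : kernel R n := fun p p' => (psi p * Num.conj (psi p')) *: rho.

Definition ket_q (R : realType) (q : R -> R) : R -> R[i] :=
  fun p => cR (Num.sqrt (q p)).

(* W X W^dagger for W = e^{i x^ (x) A} = sum_i e^{i a_i x^} (x) |i><i|.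
   With <x|p> = e^{ipx}/sqrt(2 pi), e^{i a x^}|p> = |p + a>, i.e.
   W (|p> (x) |i>) = |p + a_i> (x) |i>;  hence the kernel of W X W^dagger is
   (p, p') |-> sum_{i,j} |i><i| X(p - a_i, p' - a_j) |j><j|. *)
Definition conjW (R : realType) n (U : 'M[R[i]]_n) (a : 'I_n -> R)
  (X : kernel R n) : kernel R n :=
  fun p p' => \sum_(i < n) \sum_(j < n)
      eproj U i *m X (p - a i) (p' - a j) *m eproj U j.

(* p |-> Tr[(|p><p| (x) I) X] *)
Definition mom_density (R : realType) n (X : kernel R n) : R -> R[i] :=
  fun p => \tr (X p p).

(* Main.v *)
Require Import Defs.
Set Warnings "-all".
From mathcomp Require Import all_boot all_algebra complex.
From mathcomp Require Import all_classical all_reals all_analysis.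
From mathcomp Require Import lra ring measurable_realfun measurable_fun_approximation.
Import order.Order.TTheory GRing.Theory Num.Theory.
Local Open Scope ring_scope.
Local Open Scope classical_set_scope.

Lemma lebesgue_shift (R : realType) (c : R) (A : set R) : measurable A ->
  pushforward (@lebesgue_measure R) (fun x : measurableTypeR R => (x - c : measurableTypeR R)) A = lebesgue_measure A.
Proof.
move=> mA; apply/esym/lebesgue_measure_unique => //=.
  by apply: measurable_realfun.measurable_funD => //; exact: measurable_cst.
move=> _ _ [[x y]] _ <-.
rewrite /pushforward /=.
have -> : (fun x0 : R => x0 - c) @^-1` `]x, y] = `](x + c), (y + c)]%classic.
  apply/seteqP; split => z /=; rewrite !in_itv /= => /andP[h1 h2]; apply/andP; split; lra.
rewrite !lebesgue_measure_itv/= !lte_fin ltrD2r.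
case: ifP => // _.
by rewrite -EFinB; congr (_%:E); rewrite opprD addrACA subrr addr0.
Qed.

Lemma ge0_integral_shift (R : realType) (c : R) (f : R -> \bar R) :
  measurable_fun [set: R] f -> (forall x, (0 <= f x)%E) ->
  (\int[@lebesgue_measure R]_x f (x - c)%R = \int[@lebesgue_measure R]_x f x)%E.
Proof.
move=> mf f0.
have mphi : measurable_fun [set: measurableTypeR R] (fun x : measurableTypeR R => (x - c : measurableTypeR R)).
  by apply: measurable_funD => //; exact: measurable_cst.
have := @ge0_integral_pushforward _ _ _ _ R _ mphi (@lebesgue_measure R) setT f measurableT mf (fun y _ => f0 y).
rewrite preimage_setT => <-.
apply: eq_measure_integral => B mB _.
exact: lebesgue_shift.
Qed.


Lemma adjm_col_mul_entry (R : realType) n (U V : 'M[R[i]]_n) j i :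
  (adjm (col j U) *m col i V) 0 0 = (adjm U *m V) j i.
Proof. by rewrite !mxE; apply: eq_bigr => k _; rewrite !mxE. Qed.

Lemma eproj_mul (R : realType) n (U : 'M[R[i]]_n) : unitary U ->
  forall i j, eproj U j *m eproj U i = (j == i)%:R *: eproj U i.
Proof.
move=> HU i j; rewrite /eproj mulmxA -(mulmxA (col j U)).
rewrite [adjm _ *m col i U]mx11_scalar adjm_col_mul_entry HU mxE mul_mx_scalar.
by case: eqVneq => [->|_]; rewrite ?scale1r ?scale0r ?mul0mx.
Qed.

Lemma tr_eproj (R : realType) n (U rho : 'M[R[i]]_n) i :
  \tr (eproj U i *m rho) = (adjm (col i U) *m rho *m col i U) 0 0.
Proof. by rewrite /eproj -mulmxA mxtrace_mulC trace_mx11. Qed.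

Lemma sum_eproj (R : realType) n (U : 'M[R[i]]_n) : unitary U ->
  \sum_(i < n) eproj U i = 1%:M.
Proof.
move=> HU; have <- : U *m adjm U = 1%:M by apply: mulmx1C.
apply/matrixP => x y; rewrite summxE !mxE; apply: eq_bigr => k _.
by rewrite !mxE big_ord1 !mxE.
Qed.

Lemma tr_real (R : realType) n (U rho : 'M[R[i]]_n) i : density_op rho ->
  \tr (eproj U i *m rho) = cR (complex.Re (\tr (eproj U i *m rho))) /\
  0 <= complex.Re (\tr (eproj U i *m rho)).
Proof.
case=> _ Hpos _; have := Hpos (col i U); rewrite -tr_eproj.
case: (\tr _) => x y; rewrite lecE /= => /andP[/eqP -> hx]; split => //.
Qed.

Lemma P_formula (R : realType) n (U rho : 'M[R[i]]_n) (a : 'I_n -> R) (q : R -> R) :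
  unitary U -> (forall x, 0 <= q x) -> forall p,
  mom_density (conjW U a (prod_state (ket_q q) rho)) p =
  \sum_(i < n) cR (q (p - a i)) * \tr (eproj U i *m rho).
Proof.
move=> HU q0 p; rewrite /mom_density /conjW /prod_state raddf_sum.
apply: eq_bigr => i _; rewrite raddf_sum (bigD1 i) //= big1 ?addr0; last first.
  move=> j /negbTE ji.
  rewrite -scalemxAr -scalemxAl mxtraceZ mxtrace_mulC mulmxA eproj_mul // ji.
  by rewrite scale0r mul0mx linear0 mulr0.
rewrite -scalemxAr -scalemxAl mxtraceZ mxtrace_mulC mulmxA eproj_mul // eqxx scale1r.
congr (_ * _); rewrite /ket_q geC0_conj; last by rewrite /cR ler0c sqrtr_ge0.
by rewrite /cR -rmorphM -expr2 sqr_sqrtr.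
Qed.

Lemma fcalc_tr (R : realType) n (U rho : 'M[R[i]]_n) (a : 'I_n -> R) (f : R -> R) :
  \tr (fcalc U a f *m rho) = \sum_(i < n) cR (f (a i)) * \tr (eproj U i *m rho).
Proof.
rewrite /fcalc mulmx_suml raddf_sum; apply: eq_bigr => i _ /=.
by rewrite -scalemxAl mxtraceZ.
Qed.

Theorem theorem3 (R : realType) (n : nat)
  (q : R -> R) (r : R -> R)
  (A : 'M[R[i]]_n) (U : 'M[R[i]]_n) (a : 'I_n -> R) (rho : 'M[R[i]]_n) :
  prob_density q ->
  (forall x, q (- x) = q x) ->
  measurable_fun setT r ->
  unitary U ->
  A = \sum_(i < n) cR (a i) *: eproj U i ->
  (forall i, (\int[(@lebesgue_measure R)]_p (`|r p| * q (a i - p))%:E < +oo)%E) ->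
  density_op rho ->
  let s := fun x : R => \int[(@lebesgue_measure R)]_p (q (x - p) * r p) in
  let P := mom_density (conjW U a (prod_state (ket_q q) rho)) in
  exists Pr : R -> R,
    [/\ (forall p, P p = cR (Pr p)),
        prob_density Pr,
        (@lebesgue_measure R).-integrable setT (fun p => (r p * Pr p)%:E)
      & cR (\int[(@lebesgue_measure R)]_p (r p * Pr p)) = \tr (fcalc U a s *m rho)].
Proof.
move=> [mq q0 q1] qeven mr HU HA Hint Hrho s P.
pose w := fun i : 'I_n => complex.Re (\tr (eproj U i *m rho)).
have wE i : \tr (eproj U i *m rho) = cR (w i) by case: (@tr_real R n U rho i Hrho).
have w0 i : 0 <= w i by case: (@tr_real R n U rho i Hrho).
have w1 : \sum_(i < n) w i = 1.
  apply: (@complexI R); rewrite rmorph_sum rmorph1.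
  transitivity (\tr rho); last by case: Hrho.
  rewrite -[X in \tr X](mul1mx rho) -(@sum_eproj R n U HU) mulmx_suml raddf_sum.
  apply: eq_bigr => i _ /=; by rewrite wE.
pose Pr p := \sum_(i < n) w i * q (p - a i).
have mqs (c : R) : measurable_fun [set: R] (fun p : R => q (p - c)).
  apply: (measurableT_comp mq); apply: measurable_funD => //; exact: measurable_cst.
have mqs' (c : R) : measurable_fun [set: R] (fun p : R => q (c - p)).
  apply: (measurableT_comp mq); apply: measurable_funB => //; exact: measurable_cst.
have Heven i p : q (p - a i) = q (a i - p) by rewrite -qeven opprB.
have Hpt p : (r p * Pr p)%:E = \sum_(i < n) ((w i)%:E * (q (a i - p) * r p)%:E)%E.
  rewrite /Pr mulr_sumr -sumEFin; apply: eq_bigr => i _; rewrite -EFinM Heven.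
  by congr (_%:E); ring.
have Hinti i : (@lebesgue_measure R).-integrable setT (fun p => (q (a i - p) * r p)%:E).
  apply/integrableP; split.
    by apply/measurable_EFinP; apply: measurable_funM; [exact: mqs'|exact: mr].
  rewrite (_ : (\int[_]_(x in _) _ = \int[@lebesgue_measure R]_p (`|r p| * q (a i - p))%:E)%E); first exact: Hint i.
  apply: eq_integral => p _ /=; by rewrite normrM (ger0_norm (q0 _)) mulrC.
have Hint2 : (@lebesgue_measure R).-integrable setT (fun p => (r p * Pr p)%:E).
  apply: (@eq_integrable _ _ _ (@lebesgue_measure R) setT measurableT (fun p => \sum_(i < n) ((w i)%:E * (q (a i - p) * r p)%:E)%E) (fun p => (r p * Pr p)%:E)).
    by move=> p _; rewrite Hpt.
  by apply: (integrable_sum measurableT) => i _; exact: integrableZl.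
have Hval : (\int[@lebesgue_measure R]_p (r p * Pr p)%:E = (\sum_(i < n) w i * s (a i))%:E)%E.
  under eq_integral => p _ do rewrite Hpt.
  rewrite integral_sum //; last by move=> i; exact: integrableZl.
  rewrite -sumEFin; apply: eq_bigr => i _; rewrite integralZl // EFinM; congr (_ * _)%E.
  by rewrite /s /Rintegral fineK //; exact: integrable_fin_num.
exists Pr; split.
- move=> p; rewrite /P P_formula //; under eq_bigr do rewrite wE.
  rewrite /Pr /cR rmorph_sum; apply: eq_bigr => i _; by rewrite rmorphM mulrC.
- split.
  + apply: measurable_sum => i; apply: measurable_funM => //; exact: measurable_cst.
  + by move=> x; apply: sumr_ge0 => i _; exact: mulr_ge0.
  + rewrite /Pr; under eq_integral => x _ do rewrite -sumEFin.
    rewrite ge0_integral_sum //; last first.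
      by move=> i x _; rewrite lee_fin mulr_ge0.
      by move=> i; apply/measurable_EFinP; apply: measurable_funM; [exact: measurable_cst|exact: mqs].
    have Hi i : (\int[@lebesgue_measure R]_x ((w i * q (x - a i))%:E) = (w i)%:E)%E.
      under eq_integral => x _ do rewrite EFinM.
      rewrite ge0_integralZl //; last 3 first.
      - by apply/measurable_EFinP; exact: mqs.
      - by move=> x _; rewrite lee_fin.
      - by rewrite lee_fin.
      rewrite (@ge0_integral_shift R (a i) (fun x => (q x)%:E)) ?q1 ?mule1 //.
      apply/measurable_EFinP. exact: mq.
    by rewrite (eq_bigr _ (fun i _ => Hi i)) sumEFin w1.
- exact: Hint2.
- rewrite fcalc_tr; under eq_bigr do rewrite wE.
  rewrite /Rintegral Hval /=.
  rewrite /cR rmorph_sum; apply: eq_bigr => i _; by rewrite rmorphM mulrC.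
Qed.
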